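(* Assume $\rho_1=1$ and $\rho_{1,2}=\lambda^2\int_0^\infty x^2\,dB_1(x)<\infty$. Then for every fixed integer $j\ge0$, $$e_{L-j}-e_{L-j-1}=\frac{2}{\rho_{1,2}}+o(1)\qquad\text{as }L\to\infty.$$
   Context: $B_1$ is a probability distribution function on $[0,\infty)$ with positive finite mean, $\lambda>0$, $\rho_1=\lambda\int_0^\infty x\,dB_1(x)$. Let $r_j=\int_0^\infty e^{-\lambda x}\frac{(\lambda x)^j}{j!}\,dB_1(x)$, $j\ge0$, and define $(e_n)_{n\ge0}$ by $e_0=1$ and $e_n=\sum_{j=0}^n e_{n-j+1}r_j$ for $n\ge0$ ($e_n$ is the expected number of customers served during a busy period of the M/GI/1/$n$ queue with arrival rate $\lambda$ and service distribution $B_1$). *)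

(* Defs.v *)
(* B_1 is a probability measure P on the Borel sets of R
   concentrated on [0, +oo). Integrals "dB_1(x)" are \int[P]_x. *)
From HB Require Import structures.
From mathcomp Require Import all_boot all_order all_algebra.
From mathcomp Require Import all_classical all_reals all_analysis.
Set Implicit Arguments. Unset Strict Implicit. Unset Printing Implicit Defensive.
Import Order.TTheory GRing.Theory Num.Theory.
Import numFieldNormedType.Exports.
Local Open Scope ring_scope.

Definition r_coef (R : realType) (P : probability R R) (lam : R) (j : nat) : R :=
  fine (\int[P]_x (expR (- (lam * x)) * (lam * x) ^+ j / (j`!)%:R)%:E)%E.

Definition rho1 (R : realType) (P : probability R R) (lam : R) : \bar R :=
  (lam%:E * \int[P]_x x%:E)%E.

Definition rho12 (R : realType) (P : probability R R) (lam : R) : \bar R :=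
  ((lam ^+ 2)%:E * \int[P]_x (x ^+ 2)%:E)%E.

(* The defining relations of (e_n): e_0 = 1 and
   e_n = \sum_{j=0}^n e_{n-j+1} r_j for all n >= 0.  These determine e uniquely
   since r_0 > 0. *)
Definition is_e_seq (R : realType) (r : nat -> R) (e : nat -> R) : Prop :=
  e 0%N = 1 /\ forall n : nat, e n = \sum_(0 <= j < n.+1) e (n - j).+1 * r j.

(* Main.v *)
Require Import Defs.
From HB Require Import structures.
From mathcomp Require Import all_boot all_order all_algebra.
From mathcomp Require Import all_classical all_reals all_analysis.
From mathcomp Require Import ring lra zify measurable_realfun.
Import Order.TTheory GRing.Theory Num.Theory.
Import numFieldNormedType.Exports.
Local Open Scope classical_set_scope.
Local Open Scope ring_scope.

Section Alg.
Variable R : realType.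
Implicit Types x y : nat -> R.

Definition psum x n := \sum_(i < n.+1) x i.
Definition conv x y n := \sum_(i < n.+1) x i * y (n - i)%N.
Definition delta (i : nat) : R := (i == 0%N)%:R.

Lemma psumS x n : psum x n.+1 = psum x n + x n.+1.
Proof. by rewrite /psum big_ord_recr. Qed.
Lemma psum0 x : psum x 0 = x 0.
Proof. by rewrite /psum big_ord1. Qed.

Lemma convS x y n :
  conv x y n.+1 = \sum_(i < n.+1) x i * y (n.+1 - i)%N + x n.+1 * y 0%N.
Proof. by rewrite /conv big_ord_recr /= subnn. Qed.

Lemma conv_psum_r x y n : conv x (psum y) n = psum (conv x y) n.
Proof.
elim: n => [|n IH].
  by rewrite /conv /psum !big_ord1.
rewrite convS psumS -IH convS psum0.
have -> : \sum_(i < n.+1) x i * psum y (n.+1 - i)%N =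
   conv x (psum y) n + \sum_(i < n.+1) x i * y (n.+1 - i)%N.
  rewrite /conv -big_split /=; apply: eq_bigr => i _.
  by rewrite subSn ?psumS ?mulrDr // -ltnS ltn_ord.
by rewrite addrA.
Qed.

Lemma convC x y n : conv x y n = conv y x n.
Proof.
rewrite /conv (reindex_inj rev_ord_inj) /=; apply: eq_bigr => i _.
rewrite subSS subKn; first exact: mulrC.
by rewrite -ltnS ltn_ord.
Qed.

Lemma conv_psum_l x y n : conv (psum x) y n = psum (conv x y) n.
Proof.
rewrite convC conv_psum_r /psum; apply: eq_bigr => i _; exact: convC.
Qed.

Lemma psum_inj x y : (forall n, psum x n = psum y n) -> forall n, x n = y n.
Proof.
move=> h [|n]; first by have := h 0%N; rewrite !psum0.
have := h n.+1; rewrite !psumS h; exact: addrI.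
Qed.

Lemma conv_delta y n : conv delta y n = y n.
Proof.
rewrite /conv big_ord_recl /= subn0 mul1r big1 ?addr0 // => i _.
by rewrite /delta /= mul0r.
Qed.

Lemma psum_delta n : psum delta n = 1.
Proof.
rewrite /psum big_ord_recl big1 ?addr0 // => i _.
Qed.

Lemma conv_sub x x' y n :
  conv (fun i => x i - x' i) y n = conv x y n - conv x' y n.
Proof. by rewrite /conv -sumrB; apply: eq_bigr => i _; rewrite mulrBl. Qed.

Lemma psum_sub x x' n : psum (fun i => x i - x' i) n = psum x n - psum x' n.
Proof. by rewrite /psum sumrB. Qed.


Section Eseq.
Variables (r e : nat -> R).
Hypothesis he : is_e_seq r e.

Definition dd n := e n - (if n is k.+1 then e k else 0).
Definition aa k := 1 - psum r k.
Definition TT k := 1 - psum aa k.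

Lemma psum_dd n : psum dd n = e n.
Proof.
elim: n => [|n IH]; first by rewrite psum0 /dd subr0.
by rewrite psumS IH /dd addrC subrK.
Qed.

Lemma conv_re n : conv r e n.+1 = e n + r n.+1.
Proof.
case: he => e0 /(_ n) ->.
rewrite convS e0 mulr1 big_mkord; congr (_ + _).
apply: eq_bigr => i _; rewrite mulrC subSn //.
by rewrite -ltnS ltn_ord.
Qed.

Lemma conv_re0 : conv r e 0 = r 0%N.
Proof. by case: he => e0 _; rewrite /conv big_ord1 e0 mulr1. Qed.

Lemma aa_psum k : aa k = psum (fun i => delta i - r i) k.
Proof. by rewrite psum_sub psum_delta. Qed.

Lemma TT_psum k : TT k = psum (fun i => delta i - aa i) k.
Proof. by rewrite psum_sub psum_delta. Qed.

Lemma key1 n : conv (fun i => delta i - aa i) e n = psum r n.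
Proof.
rewrite conv_sub conv_delta.
have -> : conv aa e n = psum (conv (fun i => delta i - r i) e) n.
  rewrite -conv_psum_l /conv; apply: eq_bigr => i _; by rewrite aa_psum.
elim: n => [|n IH].
  by rewrite !psum0 conv_sub conv_delta conv_re0 opprB addrC subrK.
rewrite !psumS conv_sub conv_delta conv_re.
rewrite -IH; case: he => _ _.
rewrite opprD addrA; lra.
Qed.

Lemma E1 n : conv (fun i => delta i - aa i) dd n = r n.
Proof.
move: n; apply: psum_inj => k.
rewrite -conv_psum_r -key1 /conv; apply: eq_bigr => i _; by rewrite psum_dd.
Qed.

Lemma E2 n : conv TT dd n = psum r n.
Proof.
rewrite -key1 /conv.
transitivity (conv (psum (fun i => delta i - aa i)) dd n).
  by apply: eq_bigr => i _; rewrite TT_psum.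
rewrite conv_psum_l -conv_psum_r /conv; apply: eq_bigr => i _; by rewrite psum_dd.
Qed.

End Eseq.
End Alg.
Arguments psum {R}. Arguments conv {R}. Arguments delta {R}.
Arguments dd {R}. Arguments aa {R}. Arguments TT {R}.
Arguments E1 {R r e}. Arguments E2 {R r e}.

Section Tails.
Variable R : realType.
Implicit Types x y : nat -> R.

Lemma psum_nd x : (forall i, 0 <= x i) -> forall n k, psum x n <= psum x (n + k)%N.
Proof.
move=> x0 n; elim=> [|k IH]; first by rewrite addn0.
by rewrite addnS psumS (le_trans IH) // lerDl.
Qed.

Lemma psum_le_lim x (s : R) : (forall i, 0 <= x i) -> psum x @ \oo --> s ->
  forall n, psum x n <= s.
Proof.
move=> x0 hx n.
apply: (ler_cvg_to (cvg_cst (psum x n)) hx).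
near=> k; have nk : (n <= k)%N by near: k; exists n.
by rewrite -(subnKC nk) psum_nd.
Unshelve. all: by end_near. Qed.

Lemma tails (p w : nat -> R) (s mu : R) :
  (forall i, 0 <= p i) -> (forall i, 0 <= w i) ->
  psum p @ \oo --> s ->
  psum (fun l => (\sum_(i < l) w i) * p l) @ \oo --> mu ->
  psum (fun i => w i * (s - psum p i)) @ \oo --> mu.
Proof.
move=> p0 w0 hp hq.
set W := fun l => \sum_(i < l) w i.
set q := fun l => W l * p l.
have WS l : W l.+1 = W l + w l by rewrite /W big_ord_recr.
have Wnd n k : W n <= W (n + k)%N.
  elim: k => [|k IH]; first by rewrite addn0.
  by rewrite addnS WS (le_trans IH) // lerDl.
have W0 n : 0 <= W n by rewrite /W sumr_ge0.
have q0 i : 0 <= q i by rewrite /q mulr_ge0.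
have id n : psum (fun i => w i * (s - psum p i)) n =
            psum q n + W n.+1 * (s - psum p n).
  elim: n => [|n IH].
    by rewrite !psum0 /q /W big_ord1 big_ord0 mul0r add0r.
  rewrite /q !psumS IH !WS; ring.
have b1 n : 0 <= W n.+1 * (s - psum p n).
  by rewrite mulr_ge0 // subr_ge0 psum_le_lim.
have b2 n : W n.+1 * (s - psum p n) <= mu - psum q n.
  have hk k : W n.+1 * (psum p (n + k)%N - psum p n) <= psum q (n + k)%N - psum q n.
    elim: k => [|k IH]; first by rewrite addn0 !subrr mulr0.
    rewrite addnS !psumS.
    have : W n.+1 * p (n + k)%N.+1 <= q (n + k)%N.+1.
      rewrite /q ler_wpM2r //.
      by have := Wnd n.+1 k; rewrite addSn.
    lra.
  have c1 : (fun k => W n.+1 * (psum p (n + k)%N - psum p n)) @ \oo -->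
            W n.+1 * (s - psum p n).
    apply: cvgMr; apply: cvgB; last exact: cvg_cst.
    have := hp; rewrite -(cvg_shiftn n); apply: cvg_trans.
    by apply: near_eq_cvg; near=> k; rewrite addnC.
  have c2 : (fun k => psum q (n + k)%N - psum q n) @ \oo --> mu - psum q n.
    apply: cvgB; last exact: cvg_cst.
    have := hq; rewrite -(cvg_shiftn n); apply: cvg_trans.
    by apply: near_eq_cvg; near=> k; rewrite addnC.
  apply: (ler_cvg_to c1 c2); exact: nearW.
apply: (@squeeze_cvgr _ _ _ _ (psum q) (fun _ => mu)); last exact: cvg_cst.
  apply: nearW => n; rewrite id; apply/andP; split.
    by rewrite lerDl.
  by have := b2 n; lra.
exact: hq.
Unshelve. all: by end_near. Qed.

End Tails.
Arguments psum_nd {R}. Arguments psum_le_lim {R}. Arguments tails {R}.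

Section GG.
Variable R : realType.

Lemma sum_split2 (f : nat -> R) K :
  \sum_(i < K.+2) f i = f 0%N + f 1%N + \sum_(i < K) f i.+2.
Proof. by rewrite !big_ord_recl /= addrA. Qed.

Lemma G (a x : nat -> R) (B : R) :
  (forall i, 0 <= a i) -> (forall K, psum a K <= 1) -> 0 < a 1%N ->
  (forall n, 0 <= x n) -> (forall n, x n <= B) ->
  (forall dl, 0 < dl -> exists K N, [/\ (1 <= K)%N, 1 - dl <= psum a K &
      forall k, (N <= k)%N -> `|x k - \sum_(i < K.+1) a i * x (k - i)%N| <= dl]) ->
  exists s : R, (forall eps, 0 < eps -> exists N, forall n, (N <= n)%N -> x n <= s + eps) /\
    (forall eps, 0 < eps -> forall J N, exists n, (N <= n)%N /\
        forall j, (j <= J)%N -> s - eps <= x (n - j)%N).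
Proof.
move=> a0 aS a1 x0 xB AP.
pose U := [set y : R | exists N, forall n, (N <= n)%N -> x n <= y].
have U0 : U !=set0 by exists B; exists 0%N => n _; exact: xB.
have Ulb : lbound U 0.
  by move=> y [N hN]; exact: le_trans (x0 N) (hN N (leqnn N)).
have Uh : has_lbound U by exists 0.
pose s := inf U.
have s0 : 0 <= s by apply: lb_le_inf.
have FA : forall eps, 0 < eps -> exists N, forall n, (N <= n)%N -> x n <= s + eps.
  move=> eps e0; have : inf U < s + eps by rewrite ltrDl.
  by case/(inf_lt U0) => y [N hN] ys; exists N => n Nn; exact: le_trans (hN n Nn) (ltW ys).
have FB : forall dl, 0 < dl -> forall N, exists n, (N <= n)%N /\ s - dl <= x n.
  move=> dl d0 N; apply/not_existsP => hn.
  have : U (s - dl).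
    exists N => n Nn.
    have : ~ (s - dl <= x n) by move=> h; apply: (hn n); split.
    by move/negP; rewrite -ltNge => /ltW.
  move=> /(ge_inf Uh); rewrite -/s; lra.
pose c := 1 + 3 / a 1%N.
have c1 : 1 <= c by rewrite lerDl divr_ge0 // ltW.
have OS : forall dl, 0 < dl -> exists N0, forall k, (N0 <= k)%N ->
    s - dl <= x k -> s - c * dl <= x (k - 1)%N.
  move=> dl d0.
  have [K [N1 [K1 aK hK]]] := AP dl d0.
  have [N2 hN2] := FA dl d0.
  exists (N1 + N2 + K)%N => k Nk xk.
  have kN1 : (N1 <= k)%N by lia.
  have := hK k kN1.
  case: K K1 aK hK Nk => // K' _ aK _ Nk.
  rewrite (sum_split2 (fun i => a i * x (k - i)%N)) => habs.
  have hrest : a 0%N * x (k - 0)%N + \sum_(i < K') a i.+2 * x (k - i.+2)%N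
      <= (a 0%N + \sum_(i < K') a i.+2) * (s + dl).
    rewrite mulrDl big_distrl /=; apply: lerD.
      by apply: ler_wpM2l => //; apply: hN2; lia.
    apply: ler_sum => i _; apply: ler_wpM2l => //; apply: hN2.
    have := ltn_ord i; lia.
  have hsum : a 0%N + \sum_(i < K') a i.+2 <= 1 - a 1%N.
    by have := aS K'.+1; rewrite /psum (sum_split2 a); lra.
  have hm : (a 0%N + \sum_(i < K') a i.+2) * (s + dl) <= (1 - a 1%N) * (s + dl).
    by apply: ler_wpM2r => //; lra.
  move: habs; rewrite ler_norml => /andP [_ habs].
  have e : a 1%N * (s - c * dl) = a 1%N * s - a 1%N * dl - 3 * dl.
    rewrite /c; field; exact: lt0r_neq0.
  rewrite -(ler_pM2l a1) e.
  rewrite subn0 in hrest habs. rewrite mulrBl mul1r !mulrDr in hm. nra.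
have PJ : forall J eps, 0 < eps -> forall N, exists n, (N <= n)%N /\
    forall j, (j <= J)%N -> s - eps <= x (n - j)%N.
  elim=> [|J IH] eps e0 N.
    have [n [Nn hn]] := FB eps e0 N.
    by exists n; split => // j; rewrite leqn0 => /eqP ->; rewrite subn0.
  pose dl := eps / c.
  have cpos : 0 < c by apply: lt_le_trans c1.
  have d0 : 0 < dl by rewrite divr_gt0.
  have dle : dl <= eps by rewrite ler_pdivrMr // ler_peMr // ltW.
  have cdl : c * dl = eps by rewrite /dl mulrC divfK // lt0r_neq0.
  have [N0 hN0] := OS dl d0.
  have [n [Nn hn]] := IH dl d0 (N + N0 + J)%N.
  exists n; split; first lia.
  move=> j; rewrite leq_eqVlt => /orP [/eqP -> | jJ].
    have hNJ : (N0 <= n - J)%N by lia.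
    have := hN0 (n - J)%N hNJ (hn J (leqnn J)).
    rewrite cdl => h; have -> : (n - J.+1 = n - J - 1)%N by lia.
    exact: h.
  by apply: le_trans (hn j _); [lra | lia].
exists s; split => //.
move=> eps e0 J N; exact: PJ.
Qed.

End GG.
Arguments G {R}.

Section Renew.
Variable R : realType.

Lemma ev_ge (u : nat -> R) (l z : R) : u @ \oo --> l -> z < l ->
  exists N, forall n, (N <= n)%N -> z <= u n.
Proof. by move=> hu h; case: (cvgr_ge _ hu z h) => N _ HN; exists N => n Nn; exact: HN. Qed.

Lemma ev_le (u : nat -> R) (l z : R) : u @ \oo --> l -> l < z ->
  exists N, forall n, (N <= n)%N -> u n <= z.
Proof. by move=> hu h; case: (cvgr_le _ hu z h) => N _ HN; exists N => n Nn; exact: HN. Qed.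

Lemma sum_split_tail (F : nat -> R) K k : (K <= k)%N ->
  \sum_(i < k.+1) F i = \sum_(i < K.+1) F i + \sum_(K.+1 <= i < k.+1) F i.
Proof. by move=> Kk; rewrite -!(big_mkord xpredT F) (@big_cat_nat _ _ _ K.+1). Qed.

Variables (r d : nat -> R) (m : R).
Hypotheses (hr0 : forall i, 0 <= r i) (hrp : 0 < r 0%N)
  (hr : psum r @ \oo --> (1:R))
  (hr1 : psum (fun l => l%:R * r l) @ \oo --> (1:R))
  (ha : psum (aa r) @ \oo --> (1:R))
  (hT : psum (TT r) @ \oo --> m)
  (hE1 : forall n, conv (fun i => delta i - aa r i) d n = r n)
  (hE2 : forall n, conv (TT r) d n = psum r n).

Let a := aa r.
Let T := TT r.

Lemma a_ge0 i : 0 <= a i.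
Proof. by rewrite /a /aa subr_ge0 (psum_le_lim r). Qed.

Lemma aS K : psum a K <= 1.
Proof. exact: (psum_le_lim a _ a_ge0 ha). Qed.

Lemma T_ge0 i : 0 <= T i.
Proof. by rewrite /T /TT subr_ge0 aS. Qed.

Lemma a0e : a 0%N = 1 - r 0%N.
Proof. by rewrite /a /aa psum0. Qed.

Lemma T0e : T 0%N = r 0%N.
Proof. rewrite /T /TT psum0 -/a a0e; lra. Qed.

Lemma a1pos : 0 < a 1%N.
Proof.
rewrite lt_def a_ge0 andbT; apply/eqP => h1.
have p1 : psum r 1 = 1 by move: h1; rewrite /a /aa; lra.
have pn n : psum r n.+1 = 1.
  apply/eqP; rewrite eq_le (psum_le_lim r) //=.
  by rewrite -p1 -(addn1 n) addnC psum_nd.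
have rn n : r n.+2 = 0.
  by have := pn n.+1; rewrite psumS pn; lra.
have qn n : psum (fun l => l%:R * r l) n.+1 = r 1%N.
  elim: n => [|n IH]; first by rewrite psumS psum0 mul0r add0r mul1r.
  by rewrite psumS IH rn mulr0 addr0.
have c : (fun n => psum (fun l => l%:R * r l) n) @ \oo --> r 1%N.
  rewrite -(cvg_shiftn 1).
  have -> : (fun n => psum (fun l => l%:R * r l) (n + 1)%N) = (fun _ => r 1%N).
    by apply/funext => n; rewrite addn1 qn.
  exact: cvg_cst.
have e1 : r 1%N <= 1 by apply: (ler_cvg_to c hr1); apply: nearW => n.
have e2 : 1 <= r 1%N by apply: (ler_cvg_to hr1 c); apply: nearW => n.
have r11 : r 1%N = 1 by apply/le_anti; rewrite e1 e2.
move: p1; rewrite psumS psum0 r11 => /(congr1 (fun t => t - 1)).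
rewrite addrK subrr => r00.
by move: hrp; rewrite r00 ltxx.
Unshelve. all: by end_near. Qed.


Lemma E1' n : d n = r n + conv a d n.
Proof. by have := hE1 n; rewrite conv_sub conv_delta -/a => <-; rewrite subrK. Qed.

Lemma convaS n : conv a d n = a 0%N * d n + \sum_(i < n) a i.+1 * d (n - i.+1)%N.
Proof. by rewrite /conv big_ord_recl subn0. Qed.

Lemma d_ge0 n : 0 <= d n.
Proof.
elim/ltn_ind: n => n IH.
have e := E1' n; rewrite convaS a0e in e.
have hs : 0 <= \sum_(i < n) a i.+1 * d (n - i.+1)%N.
  apply: sumr_ge0 => i _; rewrite mulr_ge0 ?a_ge0 // IH //.
  have := ltn_ord i; lia.
have : 0 <= r 0%N * d n.
  have -> : r 0%N * d n = r n + \sum_(i < n) a i.+1 * d (n - i.+1)%N.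
    by rewrite mulrBl mul1r in e; lra.
  by rewrite addr_ge0.
by rewrite pmulr_rge0.
Qed.

Lemma d_le n : d n <= (r 0%N)^-1.
Proof.
have := hE2 n; rewrite /conv big_ord_recl subn0 -/T T0e => e.
have hs : 0 <= \sum_(i < n) T (lift ord0 i) * d (n - lift ord0 i)%N.
  by apply: sumr_ge0 => i _; rewrite mulr_ge0 ?T_ge0 ?d_ge0.
have : r 0%N * d n <= 1.
  have := psum_le_lim r 1 hr0 hr n; rewrite -e; lra.
by move=> h; rewrite -(ler_pM2l hrp) mulfV ?gt_eqF.
Qed.


Lemma APd dl : 0 < dl -> exists K N, [/\ (1 <= K)%N, 1 - dl <= psum a K &
  forall k, (N <= k)%N -> `|d k - \sum_(i < K.+1) a i * d (k - i)%N| <= dl].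
Proof.
move=> d0.
set M := (r 0%N)^-1.
have M0 : 0 < M by rewrite invr_gt0.
set eta := dl / (2 * (M + 1)).
have eta0 : 0 < eta by rewrite divr_gt0 // mulr_gt0 // addr_gt0.
have etaM : (M + 1) * eta = dl / 2.
  rewrite /eta; field; exact: lt0r_neq0 (addr_gt0 M0 ltr01).
have [K0 hK0] : exists N, forall n, (N <= n)%N -> 1 - eta <= psum a n.
  by apply: (ev_ge _ 1); [exact: ha | rewrite gtrBl].
have [N0 hN0] : exists N, forall n, (N <= n)%N -> 1 - dl / 2 <= psum r n.
  by apply: (ev_ge _ 1); [exact: hr | rewrite gtrBl divr_gt0].
exists K0.+1, (K0.+1 + N0 + 1)%N; split => //.
  apply: le_trans (hK0 K0.+1 (leqnSn _)); rewrite mulrDl mul1r in etaM.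
  have := mulr_ge0 (ltW M0) (ltW eta0); lra.
move=> k Nk.
have Kk : (K0.+1 <= k)%N by lia.
have rk : r k <= dl / 2.
  have k0 : (0 < k)%N by lia.
  have hk1 : (N0 <= k.-1)%N by lia.
  have e2 : psum r k = psum r k.-1 + r k by rewrite -{1}(prednK k0) psumS prednK.
  have := hN0 _ hk1; have := psum_le_lim r 1 hr0 hr k; lra.
have e := E1' k.
rewrite /conv (sum_split_tail (fun i => a i * d (k - i)%N) _ _ Kk) in e.
set tl := \sum_(K0.+2 <= i < k.+1) a i * d (k - i)%N in e.
have tl0 : 0 <= tl by apply: sumr_ge0 => i _; rewrite mulr_ge0 ?a_ge0 ?d_ge0.
have tlM : tl <= M * (psum a k - psum a K0.+1).
  rewrite /psum (sum_split_tail a _ _ Kk) addrAC subrr add0r big_distrr /=.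
  by apply: ler_sum => i _; rewrite mulrC ler_wpM2r ?a_ge0 ?d_le.
have pa : psum a k <= 1 := aS k.
have pK : 1 - eta <= psum a K0.+1 := hK0 K0.+1 (leqnSn _).
have tlM' : tl <= M * eta.
  apply: le_trans tlM _; rewrite ler_wpM2l ?(ltW M0) //; lra.
rewrite mulrDl mul1r in etaM.
have := mulr_ge0 (ltW M0) (ltW eta0).
have -> : d k - \sum_(i < K0.+2) a i * d (k - i)%N = r k + tl by rewrite e; ring.
rewrite ger0_norm ?addr_ge0 //; lra.
Qed.


Lemma m_pos : 0 < m.
Proof.
apply: lt_le_trans (psum_le_lim T m T_ge0 hT 0%N).
by rewrite psum0 T0e.
Qed.

Lemma renewal : d @ \oo --> m^-1.
Proof.
set M := (r 0%N)^-1.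
have M0 : 0 < M by rewrite invr_gt0.
have mp := m_pos.
have psT : forall J, psum T J <= m := psum_le_lim T m T_ge0 hT.
have PT0 : forall J, 0 <= psum T J.
  by move=> J; apply: sumr_ge0 => i _; exact: T_ge0.
have [s [sA sB]] := G a d M a_ge0 aS a1pos d_ge0 d_le APd.
have supper : s * m <= 1.
  have hJ : forall J, s * psum T J <= 1.
    move=> J; apply/ler_addgt0Pr => eps e0.
    set P := psum T J.
    have P0 : 0 <= P := PT0 J.
    set e' := eps / (P + 1).
    have e'0 : 0 < e' by rewrite divr_gt0 // ltr_pwDr.
    have e'P : e' * (P + 1) = eps by rewrite /e' divfK // lt0r_neq0 // ltr_pwDr.
    have [n [Jn hn]] := sB e' e'0 J J.
    have := hE2 n; rewrite /conv (sum_split_tail (fun i => T i * d (n - i)%N) J n Jn) => e.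
    have tl0 : 0 <= \sum_(J.+1 <= i < n.+1) T i * d (n - i)%N.
      by apply: sumr_ge0 => i _; rewrite mulr_ge0 ?T_ge0 ?d_ge0.
    have hd : (s - e') * P <= \sum_(i < J.+1) T i * d (n - i)%N.
      rewrite /P /psum mulrC big_distrl /=; apply: ler_sum => i _.
      by rewrite ler_wpM2l ?T_ge0 // hn // -ltnS ltn_ord.
    have := psum_le_lim r 1 hr0 hr n; rewrite -/T in e; rewrite -e.
    rewrite mulrDr mulr1 in e'P; rewrite mulrBl in hd.
    have := mulr_ge0 (ltW e'0) P0; lra.
  have lim : (fun J => s * psum T J) @ \oo --> s * m.
    by apply: cvgM => //; exact: cvg_cst.
  apply: (ler_cvg_to lim (cvg_cst (1:R))).
  by apply: nearW => J; exact: hJ.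
have sm : s <= m^-1 by rewrite -[m^-1]mul1r ler_pdivlMr.
pose x' := fun n => M - d n.
have x'0 : forall n, 0 <= x' n by move=> n; rewrite /x' subr_ge0 d_le.
have x'M : forall n, x' n <= M by move=> n; rewrite /x' gerBl d_ge0.
have APx : forall dl, 0 < dl -> exists K N, [/\ (1 <= K)%N, 1 - dl <= psum a K &
    forall k, (N <= k)%N -> `|x' k - \sum_(i < K.+1) a i * x' (k - i)%N| <= dl].
  move=> dl d0.
  set dl' := dl / (M + 1).
  have dl'0 : 0 < dl' by rewrite divr_gt0 // addr_gt0.
  have dM : dl' * (M + 1) = dl by rewrite /dl' divfK // lt0r_neq0 // addr_gt0.
  have [K [N [K1 aK hK]]] := APd dl' dl'0.
  exists K, N; split => //.
    rewrite mulrDr mulr1 in dM; have := mulr_ge0 (ltW dl'0) (ltW M0); lra.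
  move=> k Nk.
  have -> : x' k - \sum_(i < K.+1) a i * x' (k - i)%N =
      - (d k - \sum_(i < K.+1) a i * d (k - i)%N) + M * (1 - psum a K).
    have -> : \sum_(i < K.+1) a i * x' (k - i)%N =
        M * psum a K - \sum_(i < K.+1) a i * d (k - i)%N.
      rewrite /psum big_distrr /= -sumrB; apply: eq_bigr => i _.
      rewrite /x'; ring.
    rewrite /x'; ring.
  apply: le_trans (ler_normD _ _) _.
  have hn : `|M * (1 - psum a K)| = M * (1 - psum a K).
    by rewrite ger0_norm // mulr_ge0 ?(ltW M0) // subr_ge0 aS.
  rewrite normrN hn.
  have := hK k Nk.
  rewrite mulrDr mulr1 in dM.
  have : M * (1 - psum a K) <= M * dl' by rewrite ler_wpM2l ?(ltW M0) //; lra.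
  rewrite mulrC in dM; lra.
have [s' [sA' sB']] := G a x' M a_ge0 aS a1pos x'0 x'M APx.
set io := M - s'.
have ilower : 1 <= io * m.
  apply/ler_addgt0Pr => eps e0.
  set e' := eps / (m + 2).
  have m2 : 0 < m + 2 by rewrite addr_gt0.
  have e'0 : 0 < e' by rewrite divr_gt0.
  have e'm : e' * (m + 2) = eps by rewrite /e' divfK // lt0r_neq0.
  have hJ : forall J, 1 - e' <= (io + e') * psum T J + M * (m - psum T J).
    move=> J.
    have [N1 hN1] : exists N, forall n, (N <= n)%N -> 1 - e' <= psum r n.
      by apply: (ev_ge _ 1); [exact: hr | rewrite gtrBl].
    have [n [Nn hn]] := sB' e' e'0 J (N1 + J)%N.
    have Jn : (J <= n)%N by lia.
    have := hE2 n; rewrite /conv (sum_split_tail (fun i => T i * d (n - i)%N) J n Jn) => e.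
    have hd : \sum_(i < J.+1) T i * d (n - i)%N <= (io + e') * psum T J.
      rewrite /psum mulrC big_distrl /=; apply: ler_sum => i _.
      rewrite ler_wpM2l ?T_ge0 //.
      have iJ : (i <= J)%N by rewrite -ltnS ltn_ord.
      have := hn i iJ.
      rewrite /x' /io; lra.
    have tl : \sum_(J.+1 <= i < n.+1) T i * d (n - i)%N <= M * (m - psum T J).
      have h2 : M * (psum T n - psum T J) <= M * (m - psum T J).
        by rewrite ler_wpM2l ?(ltW M0) // lerB.
      apply: le_trans h2.
      rewrite /psum (sum_split_tail T _ _ Jn) addrAC subrr add0r big_distrr /=.
      apply: ler_sum => i _; rewrite mulrC ler_wpM2r ?T_ge0 ?d_le //.
    have N1n : (N1 <= n)%N by lia.
    have := hN1 n N1n.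
    rewrite -/T in e; rewrite -e; lra.
  have lim1 : (fun J => (io + e') * psum T J + M * (m - psum T J)) @ \oo -->
      (io + e') * m + M * (m - m).
    apply: cvgD; apply: cvgM; try exact: cvg_cst; try exact: hT.
    apply: cvgB; [exact: cvg_cst | exact: hT].
  have h : 1 - e' <= (io + e') * m + M * (m - m).
    by apply: (ler_cvg_to (cvg_cst _) lim1); apply: nearW.
  rewrite subrr mulr0 addr0 mulrDl in h.
  have : e' * m + e' <= eps.
    rewrite -e'm mulrDr; have := ltW e'0; lra.
  lra.
have il : m^-1 <= io by rewrite -[m^-1]mul1r ler_pdivrMr.
apply/cvgrPdist_le => eps e0.
have [N1 hN1] := sA eps e0.
have [N2 hN2] := sA' eps e0.
near=> n.
have n1 : (N1 <= n)%N by near: n; exists N1.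
have n2 : (N2 <= n)%N by near: n; exists N2.
have := hN1 n n1; have := hN2 n n2.
rewrite /x' ler_norml => h2 h1; apply/andP; split; rewrite /io in il; lra.
Unshelve. all: by end_near.
Qed.

End Renew.

Section Meas.
Variables (R : realType) (P : probability R R) (lam : R).
Hypotheses (hD : P [set x : R | 0 <= x] = 1%E) (hlam : 0 < lam).

Definition gf (l : nat) (x : R) : R := expR (- (lam * x)) * (lam * x) ^+ l / (l`!)%:R.
Let D := [set x : R | 0 <= x].

Lemma hD' : P D = 1%E.
Proof. exact: hD. Qed.

Lemma mD : measurable D.
Proof.
have -> : D = `[0, +oo[%classic.
  by apply/seteqP; split => x /=; rewrite in_itv /= andbT.
exact: measurable_itv.
Qed.

Lemma mlin : measurable_fun setT (fun x : R => lam * x).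
Proof. by apply: measurable_funM => //; exact: measurable_cst. Qed.

Lemma gf_meas l : measurable_fun setT (gf l).
Proof.
apply: measurable_funM; last exact: measurable_cst.
apply: measurable_funM.
  apply: measurableT_comp; first exact: measurable_expR.
  by apply: measurable_funN; exact: mlin.
by apply: measurable_funX; exact: mlin.
Qed.

Lemma RL (f : R -> R) : measurable_fun setT f ->
  (\int[P]_x (f x)%:E = \int[P]_(x in D) (f x)%:E)%E.
Proof.
move=> mf.
rewrite [RHS]integral_mkcond.
apply: ae_eq_integral => //.
- by apply/measurable_EFinP.
- apply/(measurable_restrictT _ mD).
  by apply/measurable_EFinP; apply: measurable_funTS.
- exists (~` D); split.
  + exact: measurableC mD.
  + have := probability_setC P mD; rewrite hD subee // => <-.
  + move=> x /= hx Dx; apply: hx => _.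
    by rewrite patchE ifT //; exact/mem_set.
Qed.


Definition es (y : R) n := \sum_(k < n) y ^+ k / (k`!)%:R.

Lemma es_cvg (y : R) : es y @ \oo --> expR y.
Proof.
have -> : es y = series (@exp_coeff R y).
  by apply/funext => n; rewrite /series /= big_mkord.
exact: is_cvg_series_exp_coeff.
Qed.

Lemma term_le (y : R) l : 0 <= y -> y ^+ l / (l`!)%:R <= expR y.
Proof.
move=> y0; case: l => [|n].
  rewrite expr0 fact0 divr1; apply: le_trans (expR_ge1Dx y); lra.
by apply: le_trans (expR_ge1Dxn n y0); rewrite lerDr.
Qed.

Lemma gf_ge0 l x : D x -> 0 <= gf l x.
Proof.
move=> Dx; have y0 : 0 <= lam * x by rewrite mulr_ge0 // ltW.
by rewrite /gf divr_ge0 ?mulr_ge0 ?expR_ge0 ?exprn_ge0.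
Qed.

Lemma gf_le1 l x : D x -> gf l x <= 1.
Proof.
move=> Dx; have y0 : 0 <= lam * x by rewrite mulr_ge0 // ltW.
rewrite /gf -mulrA.
have e1 : expR (- (lam * x)) * expR (lam * x) = 1.
  by rewrite expRN mulVf // gt_eqF // expR_gt0.
rewrite -[X in _ <= X]e1.
apply: ler_wpM2l; first exact: expR_ge0.
exact: term_le.
Qed.

Lemma factSR n : ((n.+1)`!)%:R = n.+1%:R * (n`!)%:R :> R.
Proof. by rewrite factS natrM. Qed.

Lemma fact_neq0 n : (n`!)%:R != 0 :> R.
Proof. by rewrite pnatr_eq0 -lt0n fact_gt0. Qed.

Lemma pw0 (y : R) n : psum (fun l => expR (- y) * y ^+ l / (l`!)%:R) n = expR (- y) * es y n.+1.
Proof. rewrite /psum /es big_distrr; apply: eq_bigr => i _.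
by rewrite /= mulrA. Qed.

Lemma pw1 (y : R) n : psum (fun l => l%:R * (expR (- y) * y ^+ l / (l`!)%:R)) n.+1 =
   y * expR (- y) * es y n.+1.
Proof.
elim: n => [|n IH].
  rewrite psumS psum0 /es big_ord1 mul0r add0r !fact0 !divr1 expr0 expr1 mul1r; ring.
rewrite psumS IH /es [in RHS]big_ord_recr /= !factSR.
rewrite !exprS; set z := y ^+ n.
field.
by rewrite fact_neq0 nat1r -natrD !pnatr_eq0.
Qed.

Lemma W2 l : (\sum_(i < l) (i%:R : R)) * 2 = l%:R * (l%:R - 1).
Proof.
elim: l => [|l IH]; first by rewrite big_ord0 mul0r mul0r.
by rewrite big_ord_recr /= mulrDl IH -natr1; ring.
Qed.

Lemma pw2 (y : R) n : psum (fun l => (\sum_(i < l) (i%:R : R)) * (expR (- y) * y ^+ l / (l`!)%:R)) n.+1 =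
   y ^+ 2 / 2 * expR (- y) * es y n.
Proof.
elim: n => [|n IH].
  by rewrite psumS psum0 /es !big_ord0 big_ord1 !mul0r mulr0 add0r.
rewrite psumS IH /es [in RHS]big_ord_recr /=.
have hW : \sum_(i < n.+2) (i%:R : R) = n.+2%:R * n.+1%:R / 2.
  have := W2 n.+2.
  have -> : (n.+2%:R : R) - 1 = n.+1%:R by rewrite -natr1 addrK.
  by move=> h; rewrite -h mulfK.
rewrite hW !factSR !exprS; set z := y ^+ n.
field.
by rewrite fact_neq0 nat1r -natrD !pnatr_eq0.
Qed.


Lemma mgfD l : measurable_fun D (gf l).
Proof. exact: measurable_funTS (gf_meas l). Qed.

Lemma intf l : (\int[P]_(x in D) (gf l x)%:E)%E \is a fin_num.
Proof.
rewrite ge0_fin_numE; last by apply: integral_ge0 => x Dx; rewrite lee_fin gf_ge0.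
apply: (@le_lt_trans _ _ (\int[P]_(x in D) (cst 1%E) x)%E).
  apply: ge0_le_integral => //.
  - exact: mD.
  - by move=> x Dx; rewrite lee_fin gf_ge0.
  - by apply/measurable_EFinP; exact: mgfD.
  - by move=> x Dx; rewrite /= lee_fin gf_le1.
rewrite integral_cst ?mul1e; last exact: mD.
by apply: le_lt_trans (probability_le1 P mD) _; rewrite ltry.
Qed.

Lemma rc l : r_coef P lam l = fine (\int[P]_(x in D) (gf l x)%:E)%E.
Proof. by rewrite /r_coef (RL (gf l) (gf_meas l)). Qed.

Lemma ML (c : nat -> R) (h : R -> R) :
  (forall l, 0 <= c l) ->
  (forall x, D x -> psum (fun l => c l * gf l x) n @[n --> \oo] --> h x) ->
  (\int[P]_(x in D) (h x)%:E < +oo)%E ->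
  psum (fun l => c l * r_coef P lam l) @ \oo --> fine (\int[P]_(x in D) (h x)%:E)%E.
Proof.
move=> c0 hc hfin.
have Vn n : (\int[P]_(x in D) (psum (fun l => c l * gf l x) n)%:E)%E =
    (psum (fun l => c l * r_coef P lam l) n)%:E.
  rewrite /psum -sumEFin.
  under eq_integral do rewrite -sumEFin.
  rewrite ge0_integral_sum //; last first.
  - by move=> l x Dx; rewrite lee_fin mulr_ge0 ?gf_ge0.
  - move=> l; apply/measurable_EFinP; apply: measurable_funM => //.
    exact: mgfD.
  - exact: mD.
  apply: eq_bigr => l _.
  under eq_integral do rewrite EFinM.
  rewrite ge0_integralZl_EFin //; last first.
  - by apply/measurable_EFinP; exact: mgfD.
  - by move=> x Dx; rewrite lee_fin gf_ge0.
  - exact: mD.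
  by rewrite rc EFinM fineK // intf.
have mono : forall x, D x -> {homo (fun n => (psum (fun l => c l * gf l x) n)%:E) :
    n m / (n <= m)%N >-> (n <= m)%E}.
  move=> x Dx n m nm; rewrite lee_fin -(subnKC nm) psum_nd // => l.
  by rewrite mulr_ge0 ?gf_ge0.
have meas n : measurable_fun D (fun x => (psum (fun l => c l * gf l x) n)%:E).
  apply/measurable_EFinP; rewrite /psum; apply: measurable_sum => l.
  by apply: measurable_funM => //; exact: mgfD.
have nonneg n x : D x -> (0 <= (psum (fun l => c l * gf l x) n)%:E)%E.
  by move=> Dx; rewrite lee_fin; apply: sumr_ge0 => l _; rewrite mulr_ge0 ?gf_ge0.
have h0 : forall x, D x -> 0 <= h x.
  move=> x Dx; apply: (ler_cvg_to (cvg_cst 0) (hc x Dx)); apply: nearW => n.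
  by apply: sumr_ge0 => l _; rewrite mulr_ge0 ?gf_ge0.
have eqI : (\int[P]_(x in D) (fun x0 => limn ((fun n x => (psum (fun l => c l * gf l x) n)%:E) ^~ x0)) x)%E =
    (\int[P]_(x in D) (h x)%:E)%E.
  apply: eq_integral => x /set_mem Dx.
  apply: cvg_lim => //; apply/fine_cvgP; split; first exact: nearW.
  exact: hc x Dx.
have cvI : (fun n => \int[P]_(x in D) (psum (fun l => c l * gf l x) n)%:E)%E @ \oo -->
    (\int[P]_(x in D) (h x)%:E)%E.
  rewrite -eqI; exact: (cvg_monotone_convergence mD meas nonneg mono).
have fin : (\int[P]_(x in D) (h x)%:E)%E \is a fin_num.
  by rewrite ge0_fin_numE //; apply: integral_ge0 => x Dx; rewrite lee_fin h0.
rewrite -(fineK fin) in cvI.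
have := fine_cvg cvI.
have -> : (fine \o (fun n => \int[P]_(x in D) (psum (fun l => c l * gf l x) n)%:E)%E) =
    psum (fun l => c l * r_coef P lam l).
  by apply/funext => n /=; rewrite Vn.
by move=> H; exact: H.
Qed.


Lemma es_shift (y : R) : (fun n => es y n.+1) @ \oo --> expR y.
Proof.
have := es_cvg y; rewrite -(cvg_shiftn 1); apply: cvg_trans.
by apply: near_eq_cvg; apply: nearW => n /=; rewrite addn1.
Qed.

Lemma eyy (y : R) : expR (- y) * expR y = 1.
Proof. by rewrite expRN mulVf // gt_eqF // expR_gt0. Qed.

Lemma intD1 : (\int[P]_(x in D) (1 : R)%:E)%E = 1%E.
Proof.
have := integral_cst P mD 1%E.
rewrite mul1e => ->.
exact: hD.
Qed.

Lemma Sr : psum (r_coef P lam) @ \oo --> (1 : R).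
Proof.
have pw : forall x, D x -> psum (fun l => 1 * gf l x) n @[n --> \oo] --> (1:R).
  move=> x Dx.
  have -> : (fun n => psum (fun l => 1 * gf l x) n) =
      (fun n => expR (- (lam * x)) * es (lam * x) n.+1).
    by apply/funext => n; rewrite -pw0; apply: eq_bigr => l _; rewrite mul1r.
  rewrite -(eyy (lam * x)); apply: cvgM; [exact: cvg_cst | exact: es_shift].
have fin : (\int[P]_(x in D) (1 : R)%:E < +oo)%E by rewrite intD1 ltry.
have := ML (fun _ => 1) (fun _ => 1) (fun _ => ler01) pw fin.
rewrite intD1 /=.
have -> : psum (fun l => 1 * r_coef P lam l) = psum (r_coef P lam).
  by apply/funext => n; apply: eq_bigr => l _; rewrite mul1r.
by move=> H; exact: H.
Qed.


Lemma intlin : (\int[P]_(x in D) (lam * x)%:E)%E = rho1 P lam.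
Proof.
under eq_integral do rewrite EFinM.
rewrite ge0_integralZl_EFin //.
all: try solve [exact: mD | exact: (ltW hlam) | exact: EFin_measurable | by move=> x Dx; rewrite lee_fin].
by rewrite /rho1 (RL id) //; exact: measurable_id.
Qed.

Lemma Sr1 : rho1 P lam = 1%E -> psum (fun l => l%:R * r_coef P lam l) @ \oo --> (1 : R).
Proof.
move=> h1.
have pw : forall x, D x -> psum (fun l => l%:R * gf l x) n @[n --> \oo] --> lam * x.
  move=> x Dx; rewrite -(cvg_shiftn 1).
  have -> : (fun n => psum (fun l => l%:R * gf l x) (n + 1)%N) =
      (fun n => lam * x * expR (- (lam * x)) * es (lam * x) n.+1).
    by apply/funext => n; rewrite addn1 -pw1.
  have e1 : lam * x * expR (- (lam * x)) * expR (lam * x) = lam * x.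
    by rewrite -mulrA eyy mulr1.
  have H : (fun n => lam * x * expR (- (lam * x)) * es (lam * x) n.+1) @ \oo -->
      lam * x * expR (- (lam * x)) * expR (lam * x).
    by apply: cvgM; [exact: cvg_cst | exact: es_shift].
  by rewrite e1 in H.
have fin : (\int[P]_(x in D) (lam * x)%:E < +oo)%E by rewrite intlin h1 ltry.
have := ML (fun l => l%:R) (fun x => lam * x) (fun l => ler0n _ l) pw fin.
by rewrite intlin h1 /=.
Qed.


Lemma Sr2 : (rho12 P lam < +oo)%E ->
  psum (fun l => (\sum_(i < l) (i%:R : R)) * r_coef P lam l) @ \oo --> fine (rho12 P lam) / 2.
Proof.
move=> h2.
have I0 : (0 <= \int[P]_x (x ^+ 2)%:E)%E.
  by apply: integral_ge0 => x _; rewrite lee_fin sqr_ge0.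
have Ifin : (\int[P]_x (x ^+ 2)%:E)%E \is a fin_num.
  rewrite ge0_fin_numE //; rewrite ltNge leye_eq; apply/negP => /eqP Ioo.
  by move: h2; rewrite /rho12 Ioo gt0_muley ?lte_fin ?exprn_gt0 // ltxx.
set b := fine (\int[P]_x (x ^+ 2)%:E)%E.
have Ib : (\int[P]_x (x ^+ 2)%:E)%E = b%:E by rewrite /b fineK.
have intsq : (\int[P]_(x in D) ((lam * x) ^+ 2 / 2)%:E)%E = ((lam ^+ 2 / 2) * b)%:E.
  have -> : (fun x => ((lam * x) ^+ 2 / 2)%:E) = (fun x => ((lam ^+ 2 / 2)%:E * (x ^+ 2)%:E)%E).
    by apply/funext => x; rewrite -EFinM exprMn; congr (_%:E); ring.
  rewrite ge0_integralZl_EFin //.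
  all: try solve [exact: mD | by move=> x Dx; rewrite lee_fin sqr_ge0 |
    by rewrite divr_ge0 // sqr_ge0 | by apply/measurable_EFinP; exact: exprn_measurable].
  by rewrite -(RL (fun x => x ^+ 2)) ?Ib //; exact: exprn_measurable.
have pw : forall x, D x -> psum (fun l => (\sum_(i < l) (i%:R : R)) * gf l x) n @[n --> \oo] -->
    (lam * x) ^+ 2 / 2.
  move=> x Dx; rewrite -(cvg_shiftn 1).
  have -> : (fun n => psum (fun l => (\sum_(i < l) (i%:R : R)) * gf l x) (n + 1)%N) =
      (fun n => (lam * x) ^+ 2 / 2 * expR (- (lam * x)) * es (lam * x) n).
    by apply/funext => n; rewrite addn1 -pw2.
  have e1 : (lam * x) ^+ 2 / 2 * expR (- (lam * x)) * expR (lam * x) = (lam * x) ^+ 2 / 2.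
    by rewrite -mulrA eyy mulr1.
  have H : (fun n => (lam * x) ^+ 2 / 2 * expR (- (lam * x)) * es (lam * x) n) @ \oo -->
      (lam * x) ^+ 2 / 2 * expR (- (lam * x)) * expR (lam * x).
    by apply: cvgM; [exact: cvg_cst | exact: es_cvg].
  by rewrite e1 in H.
have fin : (\int[P]_(x in D) ((lam * x) ^+ 2 / 2)%:E < +oo)%E by rewrite intsq ltry.
have := ML (fun l => \sum_(i < l) (i%:R : R)) (fun x => (lam * x) ^+ 2 / 2) _ pw fin.
rewrite intsq /= /rho12 Ib /=.
have -> : lam ^+ 2 / 2 * b = lam ^+ 2 * b / 2 by ring.
apply; move=> l; apply: sumr_ge0 => i _; exact: ler0n.
Qed.

End Meas.

Theorem corollary1 (R : realType) (P : probability R R) (lam : R) (e : nat -> R) :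
  P [set x : R | 0 <= x] = 1%E ->
  (0 < \int[P]_x x%:E < +oo)%E ->
  0 < lam ->
  rho1 P lam = 1%E ->
  (rho12 P lam < +oo)%E ->
  is_e_seq (r_coef P lam) e ->
  forall j : nat,
    (fun L : nat => e (L - j)%N - e (L - j - 1)%N) @ \oo --> 2 / fine (rho12 P lam).
Proof.
move=> hD _ hlam h1 h12 he j.
set r := r_coef P lam in he *.
have r0 i : 0 <= r i.
  rewrite /r (@rc _ P lam hD) fine_ge0 //; apply: integral_ge0 => x Dx.
  by rewrite lee_fin /gf divr_ge0 ?mulr_ge0 ?expR_ge0 ?exprn_ge0 ?mulr_ge0 // ltW.
have hrp : 0 < r 0%N.
  rewrite lt_def r0 andbT; apply/eqP => hr0.
  case: he => e0 /(_ 0%N); rewrite big_nat1 hr0 mulr0 e0 => /eqP.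
  by rewrite oner_eq0.
have hr := @Sr _ P lam hD hlam.
have hr1 := @Sr1 _ P lam hD hlam h1.
have hr2 := @Sr2 _ P lam hD hlam h12.
set m := fine (rho12 P lam) / 2.
have hr1' : psum (fun l => (\sum_(i < l) (1 : R)) * r l) @ \oo --> (1:R).
  have -> : (fun l => (\sum_(i < l) (1 : R)) * r l) = (fun l => l%:R * r l).
    by apply/funext => l; rewrite sumr_const card_ord.
  exact: hr1.
have ha : psum (aa r) @ \oo --> (1:R).
  have := tails r (fun _ => 1) 1 1 r0 (fun _ => ler01) hr hr1'.
  have -> : (fun i => 1 * (1 - psum r i)) = aa r.
    by apply/funext => l; rewrite mul1r.
  by [].
have hia := tails r (fun i => i%:R) 1 m r0 (fun i => ler0n _ i) hr hr2.
have a0 i : 0 <= aa r i by rewrite /aa subr_ge0 (psum_le_lim r 1).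
have hia' : psum (fun l => (\sum_(i < l) (1 : R)) * aa r l) @ \oo --> m.
  have -> : (fun l => (\sum_(i < l) (1 : R)) * aa r l) = (fun i => i%:R * (1 - psum r i)).
    by apply/funext => l; rewrite sumr_const card_ord.
  exact: hia.
have hT : psum (TT r) @ \oo --> m.
  have := tails (aa r) (fun _ => 1) 1 m a0 (fun _ => ler01) ha hia'.
  have -> : (fun i => 1 * (1 - psum (aa r) i)) = TT r.
    by apply/funext => l; rewrite mul1r.
  by [].
have cv := @renewal _ r (dd e) m r0 hrp hr hr1 ha hT (E1 he) (E2 he).
have -> : 2 / fine (rho12 P lam) = m^-1 by rewrite /m invf_div.
rewrite -(cvg_shiftn j); apply: cvg_trans cv.
apply: near_eq_cvg; near=> n.
have n1 : (1 <= n)%N by near: n; exists 1%N.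
by rewrite /= addnK /dd -[in LHS](prednK n1) /= prednK // subn1.
Unshelve. all: by end_near.
Qed.
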